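(* Let $q$ be a prime power, let $1\le t<k\le m$ be integers, and let $M\in\mathrm{Mat}(t\times k,\mathbb{F}_{q^m})$ be a full-rank matrix almost in row-reduced echelon form, with rows $M_1,\dots,M_t$. Assume that $M_1$ has at least one entry in $\mathbb{F}_{q^m}\setminus\mathbb{F}_q$. Then there exist $\mathbb{F}_q$-linearly independent elements $\alpha_1,\dots,\alpha_t\in\mathbb{F}_{q^m}$ such that $\mathrm{rk}\left(\sum_{i=1}^t\alpha_iM_i\right)\ge t+1$.
   Context: For $v\in\mathbb{F}_{q^m}^k$, $\mathrm{rk}(v):=\dim_{\mathbb{F}_q}\mathrm{Span}_{\mathbb{F}_q}\{v_1,\dots,v_k\}$. A matrix is in row-reduced echelon form if each row has more initial zeros than the previous rows, and the first non-zero entry of any non-zero row equals $1$ and is the only non-zero entry in its column. A $t\times k$ matrix $M$ is almost in row-reduced echelon form if the matrix obtained by permuting its rows by some permutation of $\{1,\dots,t\}$ is in row-reduced echelon form. *)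

(* Defs.v *)
From HB Require Import structures.
From mathcomp Require Import all_boot all_order all_algebra all_fingroup all_field.
Set Implicit Arguments. Unset Strict Implicit. Unset Printing Implicit Defensive.
Import GRing.Theory.
Local Open Scope ring_scope.

(* Setting: F plays the role of F_q (a finite field), L the role of F_{q^m},
   a field extension of F of dimension m = \dim {:L}. *)

(* Number of initial zeros of row i of A (equals k for a zero row). *)
Definition lead_zeros (R : nzRingType) (t k : nat) (A : 'M[R]_(t, k)) (i : 'I_t) : nat :=
  find (fun j : 'I_k => A i j != 0) (enum 'I_k).

(* Row-reduced echelon form: each (nonzero) row has more initial zeros than the
   previous rows (this forces zero rows to the bottom), and the first nonzero
   entry of each nonzero row is 1 and is the only nonzero entry in its column. *)
Definition is_rref (R : nzRingType) (t k : nat) (A : 'M[R]_(t, k)) : Prop :=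
  (forall i1 i2 : 'I_t, (i1 < i2)%N -> row i2 A != 0 ->
      (lead_zeros A i1 < lead_zeros A i2)%N)
  /\ (forall (i : 'I_t) (j : 'I_k), A i j != 0 ->
        (forall j' : 'I_k, (j' < j)%N -> A i j' = 0) ->
        A i j = 1 /\ (forall i' : 'I_t, i' != i -> A i' j = 0)).

Definition almost_rref (R : nzRingType) (t k : nat) (A : 'M[R]_(t, k)) : Prop :=
  exists s : 'S_t, is_rref (row_perm s A).

Definition rkF (F : fieldType) (L : fieldExtType F) (k : nat) (v : 'rV[L]_k) : nat :=
  \dim (<<[seq v ord0 j | j <- enum 'I_k]>>%VS).

(* Main.v *)
Require Import Defs.
From HB Require Import structures.
From mathcomp Require Import all_boot all_order all_algebra all_fingroup all_field.
From mathcomp Require Import zify.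
Import GRing.Theory.
Local Open Scope ring_scope.

Lemma key (F : finFieldType) (L : fieldExtType F) (U : {vspace L}) (y c : L) :
  c \notin 1%VS -> (\dim U + 2 <= \dim {:L})%N ->
  exists a : L, a \notin U /\ forall l : F, a * (c - l%:A) + y \notin U.
Proof.
move=> cF dimU.
pose LT := finvect_type L.
have cl0 : forall l : F, c - l%:A != 0.
  move=> l; apply: contra cF; rewrite subr_eq0 => /eqP ->.
  by rewrite rpredZ // memv_line.
pose g (p : F * LT) : LT := (((p.2 : L) - y) / (c - p.1%:A) : L).
pose B : {set LT} := [set a : LT | a \in U] :|:
   [set g p | p in setX [set: F] [set u : LT | u \in U]].
have cardU : #|[set a : LT | a \in U]| = (#|F| ^ \dim U)%N.
  rewrite cardsE; exact: (card_vspace (U : {vspace LT})).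
have cardL : #|LT| = (#|F| ^ \dim {:L})%N.
  rewrite -(card_vspace (fullv : {vspace LT})); apply: eq_card => v; by rewrite memvf.
have cardB : (#|B| < #|LT|)%N.
  apply: (leq_ltn_trans (leq_card_setU _ _)).
  apply: (@leq_ltn_trans (#|F| ^ \dim U + #|F| * #|F| ^ \dim U)%N).
    rewrite cardU leq_add2l; apply: (leq_trans (leq_imset_card _ _)).
    by rewrite cardsX cardsT cardU.
  rewrite cardL.
  have q1 := card_finNzRing_gt1 F.
  apply: (@leq_trans (#|F| ^ (\dim U + 2))%N); last by rewrite leq_pexp2l ?(ltnW q1).
  rewrite expnD; set X := (_ ^ \dim U)%N.
  have X0 : (0 < X)%N by rewrite expn_gt0 (ltnW q1).
  rewrite -mulnn; set q := #|F| in q1 *. nia.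
case: (pickP (fun a : LT => a \notin B)) => [a Ha | H]; last first.
  exfalso; move: cardB; rewrite ltnNge => /negP; apply.
  apply: subset_leq_card; apply/subsetP => a _.
  by have := H a; move/negbT; rewrite negbK.
exists a; move: Ha; rewrite !inE negb_or => /andP [aU aB]; split => // l.
apply: contra aB => Hu; apply/imsetP.
exists (l, a * (c - l%:A) + y); first by rewrite !inE.
by rewrite /g /= addrK mulfK.
Qed.

Theorem proposition3p10 (F : finFieldType) (L : fieldExtType F) (t k : nat)
  (M : 'M[L]_(t, k)) :
  (1 <= t)%N -> (t < k)%N -> (k <= \dim {:L})%N ->
  \rank M = t ->
  almost_rref M ->
  (exists (i : 'I_t) (j : 'I_k), val i = 0%N /\ M i j \notin 1%VS) ->
  exists alpha : 'I_t -> L,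
    free [seq alpha i | i <- enum 'I_t] /\
    (t + 1 <= rkF (\sum_(i < t) alpha i *: row i M))%N.
Proof.
case: t M => [//|t'] M _ tk km rkM [s [_ rref2]] [i0 [j0 [i00 cnF]]].
have Ei0 : i0 = ord0 by apply: val_inj. subst i0.
have rowM : forall r, row r M != 0.
  move=> r; apply/negP => /eqP H0.
  have : row_free M by rewrite /row_free rkM.
  case/row_freeP => B HB.
  have : (M *m B) r r = 1 by rewrite HB mxE eqxx.
  rewrite mxE big1 => [/eqP|j _]; first by rewrite eq_sym oner_eq0.
  have : row r M 0 j = 0 by rewrite H0 mxE.
  by rewrite mxE => ->; rewrite mul0r.
have piv : forall r : 'I_t'.+1, exists p : 'I_k,
    M r p = 1 /\ forall r', r' != r -> M r' p = 0.
  move=> r; set A := row_perm s M.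
  pose i := (s^-1)%g r.
  have Ai : forall j, A i j = M r j by move=> j; rewrite /A mxE /i permKV.
  have [j Hj] : exists j, A i j != 0.
    case: (pickP (fun j => A i j != 0)) => [j Hj | H]; first by exists j.
    exfalso; move/eqP: (rowM r); apply; apply/rowP => j.
    by have := H j; rewrite /= Ai !mxE => /negbFE/eqP.
  case: (@arg_minnP _ j (fun j => A i j != 0) (fun j : 'I_k => val j) Hj) => jm Hjm Hmin.
  have hz : forall j' : 'I_k, (j' < jm)%N -> A i j' = 0.
    move=> j' lt; apply/eqP; apply: contraTT lt => nz; rewrite -leqNgt; exact: Hmin.
  have [A1 Aoth] := rref2 i jm Hjm hz.
  exists jm; split; first by rewrite -Ai.
  move=> r' nr'.
  have : A ((s^-1)%g r') jm = 0.
    apply: Aoth; apply: contra nr' => /eqP H; apply/eqP.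
    by have := congr1 s H; rewrite !permKV.
  by rewrite /A mxE permKV.
set m := \dim {:L} in km.
set e := vbasis (fullv : {vspace L}).
pose s' := [seq e`_(nat_of_ord i) | i : 'I_t' <- enum 'I_t'].
have Es' : s' = take t' e.
  rewrite /s' -(map_nth_iota0 0) ?size_tuple; last by rewrite /m in km; lia.
  by rewrite -val_enum_ord -map_comp.
have frees' : free s'.
  rewrite Es'; apply: (@catl_free _ _ (drop t' e)); rewrite cat_take_drop.
  exact: basis_free (vbasisP _).
have dimU : \dim <<s'>> = t' by rewrite (eqnP frees') /s' size_map size_enum_ord.
pose y := \sum_(i < t') e`_i * M (lift ord0 i) j0.
have dU2 : (\dim <<s'>> + 2 <= \dim {:L})%N by rewrite dimU; rewrite /m in km; lia.
have [a [aU aK]] := @key F L <<s'>>%VS y _ cnF dU2.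
pose alpha := fun i : 'I_t'.+1 => if unlift ord0 i is Some i' then e`_i' else a.
exists alpha.
have Ealpha : [seq alpha i | i <- enum 'I_t'.+1] = a :: s'.
  rewrite enum_ordSl /= /alpha unlift_none; congr cons.
  by rewrite -map_comp; apply: eq_map => i /=; rewrite liftK.
have freeA : free [seq alpha i | i <- enum 'I_t'.+1].
  by rewrite Ealpha free_cons aU frees'.
split => //.
set v := \sum_(i < t'.+1) alpha i *: row i M.
have vE : forall j, v ord0 j = \sum_i alpha i * M i j.
  by move=> j; rewrite /v summxE; apply: eq_bigr => i _; rewrite !mxE.
have xE : v ord0 j0 = a * M ord0 j0 + y.
  rewrite vE big_ord_recl /= /alpha unlift_none; congr (_ + _).
  by apply: eq_bigr => i _; rewrite liftK.
have xnotin : v ord0 j0 \notin <<[seq alpha i | i <- enum 'I_t'.+1]>>%VS.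
  rewrite Ealpha span_cons; apply/memv_addP => [[w /vlineP [l ->] [u uU Hx]]].
  move: (aK l); rewrite mulrBr mulr_algr addrAC -xE Hx.
  by rewrite [l *: a + u]addrC addrK uU.
have freeX : free (v ord0 j0 :: [seq alpha i | i <- enum 'I_t'.+1]).
  by rewrite free_cons xnotin freeA.
rewrite /rkF.
have -> : (t'.+1 + 1 = \dim <<v ord0 j0 :: [seq alpha i | i <- enum 'I_t'.+1]>>)%N.
  by rewrite (eqnP freeX) /= size_map size_enum_ord addn1.
apply: dimvS; apply/span_subvP => z; rewrite inE => /orP [/eqP -> | /mapP [r _ ->]].
  by apply: memv_span; apply: map_f; rewrite mem_enum.
have [p [Mp1 Mp0]] := piv r.
have ar : alpha r = v ord0 p.
  rewrite vE (bigD1 r) // Mp1 mulr1 big1 => [|r' nr']; first exact: (esym (addr0 _)).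
  by rewrite Mp0 ?mulr0.
rewrite ar.
by apply: memv_span; apply: map_f; rewrite mem_enum.
Qed.
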